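(* Let $\lambda\in[-1,1)$ and let $\gamma:I\to\mathbb{R}^d$ be a $\lambda$-eel. Then for every $t_1\in I$, the function $t\mapsto\|\gamma(t_1)-\gamma(t)\|+\lambda\,\ell(\gamma|_{[t_1,t]})$ is non-decreasing on $I\cap[t_1,\infty)$.
   Context: $\mathbb{R}^d$ carries the Euclidean inner product $\langle\cdot,\cdot\rangle$ and norm $\|\cdot\|$; $I\subset\mathbb{R}$ is an interval. A $\lambda$-eel is a continuous curve $\gamma:I\to\mathbb{R}^d$ with a nonzero right derivative $\gamma'(\tau)$ at each point such that for all $t<\tau$ in $I$: $\langle\gamma'(\tau),\gamma(t)-\gamma(\tau)\rangle\le\lambda\|\gamma'(\tau)\|\|\gamma(t)-\gamma(\tau)\|$. $\ell(\gamma|_{[t_1,t]})$ is the length of the restriction, $\sup\sum\|\gamma(s_i)-\gamma(s_{i+1})\|$ over finite increasing sequences in $[t_1,t]$. *)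

(* Defs.v *)
From HB Require Import structures.
From mathcomp Require Import all_boot all_order all_algebra.
From mathcomp Require Import all_classical all_reals all_analysis.
Set Implicit Arguments. Unset Strict Implicit. Unset Printing Implicit Defensive.
Import Order.TTheory GRing.Theory Num.Theory.
Import numFieldNormedType.Exports.
Local Open Scope classical_set_scope.
Local Open Scope ring_scope.

(* Euclidean inner product and norm on R^d (the library norm on matrices is
   the sup norm, so we define the Euclidean ones explicitly). *)
Definition edot (R : realType) (d : nat) (u v : 'rV[R]_d) : R :=
  \sum_(i < d) u ord0 i * v ord0 i.

Definition enorm (R : realType) (d : nat) (u : 'rV[R]_d) : R :=
  Num.sqrt (edot u u).

Definition right_deriv (R : realType) (d : nat) (I : interval R)
    (gamma : R -> 'rV[R]_d) (tau : R) (v : 'rV[R]_d) : Prop :=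
  (fun h : R => h^-1 *: (gamma (tau + h) - gamma tau))
    @ within [set h : R | tau + h \in I] (0 : R)^'+ --> v.

Definition eel (R : realType) (d : nat) (lam : R) (I : interval R)
    (gamma : R -> 'rV[R]_d) : Prop :=
  {within [set` I], continuous gamma} /\
  exists gd : R -> 'rV[R]_d,
    forall tau, tau \in I ->
      [/\ right_deriv I gamma tau (gd tau), gd tau != 0 &
          forall t, t \in I -> t < tau ->
            edot (gd tau) (gamma t - gamma tau)
              <= lam * enorm (gd tau) * enorm (gamma t - gamma tau)].

Definition polylen (R : realType) (d : nat) (gamma : R -> 'rV[R]_d)
    (s : seq R) : R :=
  \sum_(i < (size s).-1) enorm (gamma (nth 0 s i) - gamma (nth 0 s i.+1)).

Definition curve_length (R : realType) (d : nat) (gamma : R -> 'rV[R]_d)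
    (a b : R) : \bar R :=
  ereal_sup [set (polylen gamma s)%:E | s in
     [set s : seq R | sorted <%R s /\ all (fun x => (a <= x) && (x <= b)) s]].

(* Main.v *)
Require Import Defs.
From HB Require Import structures.
From mathcomp Require Import all_boot all_order all_algebra.
From mathcomp Require Import all_classical all_reals all_analysis.
From mathcomp Require Import ring lra.
Import Order.TTheory GRing.Theory Num.Theory.
Local Open Scope ring_scope.

Module Helpers.
Import numFieldNormedType.Exports.
Local Open Scope ring_scope.

Lemma aux (R : realType) (a b c : R) : b != 0 -> c - a/b*a - (a/b*a - a/b*(a/b*b)) = c - a^+2/b.
Proof. move=> hb. field. exact: hb. Qed.

Section Eucl.
Variable R : realType.
Variable d : nat.
Implicit Types x y z : 'rV[R]_d.

Lemma edotC x y : edot x y = edot y x.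
Proof. by rewrite /edot; apply: eq_bigr => i _; rewrite mulrC. Qed.

Lemma edotDl x y z : edot (x + y) z = edot x z + edot y z.
Proof. by rewrite /edot -big_split; apply: eq_bigr => i _; rewrite mxE mulrDl. Qed.

Lemma edotZl (c : R) x y : edot (c *: x) y = c * edot x y.
Proof. by rewrite /edot mulr_sumr; apply: eq_bigr => i _; rewrite mxE mulrA. Qed.

Lemma edotNl x y : edot (- x) y = - edot x y.
Proof. by rewrite -scaleN1r edotZl mulN1r. Qed.

Lemma edotBl x y z : edot (x - y) z = edot x z - edot y z.
Proof. by rewrite edotDl edotNl. Qed.

Lemma edotDr x y z : edot x (y + z) = edot x y + edot x z.
Proof. by rewrite edotC edotDl !(edotC x). Qed.

Lemma edotZr (c : R) x y : edot x (c *: y) = c * edot x y.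
Proof. by rewrite edotC edotZl edotC. Qed.

Lemma edotNr x y : edot x (- y) = - edot x y.
Proof. by rewrite edotC edotNl edotC. Qed.

Lemma edotBr x y z : edot x (y - z) = edot x y - edot x z.
Proof. by rewrite edotDr edotNr. Qed.

Lemma edot_ge0 x : 0 <= edot x x.
Proof. by rewrite /edot; apply: sumr_ge0 => i _; rewrite -expr2 sqr_ge0. Qed.

Lemma enorm_ge0 x : 0 <= enorm x.
Proof. exact: sqrtr_ge0. Qed.

Lemma enorm_sqr x : enorm x ^+ 2 = edot x x.
Proof. by rewrite /enorm sqr_sqrtr // edot_ge0. Qed.

Lemma edot0 x : edot x x = 0 -> edot x 0 = 0 /\ (forall y, edot x y = 0).
Proof.
move=> h.
have hi : forall i, x ord0 i = 0.
  move=> i; apply/eqP; rewrite -sqrf_eq0 expr2; apply/eqP.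
  move: h; rewrite /edot => /eqP; rewrite psumr_eq0; last first.
    by move=> j _; rewrite -expr2 sqr_ge0.
  by move/allP => /(_ i (mem_index_enum _)) /implyP /(_ isT) /eqP.
split; rewrite /edot; first by apply: big1 => i _; rewrite hi mul0r.
by move=> y; apply: big1 => i _; rewrite hi mul0r.
Qed.

Lemma cauchy_schwarz x y : edot x y <= enorm x * enorm y.
Proof.
have key : (edot x y) ^+ 2 <= edot x x * edot y y.
  have [hy|hy] := eqVneq (edot y y) 0.
    have [_ h] := edot0 y hy.
    by rewrite edotC h expr0n /= hy mulr0.
  have hyp : 0 < edot y y by rewrite lt_def hy edot_ge0.
  set t := edot x y / edot y y.
  have := edot_ge0 (x - t *: y).
  rewrite edotBl !edotBr !edotZl !edotZr (edotC y x).
  rewrite /t => h.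
  have e : edot x x - edot x y / edot y y * edot x y -
      (edot x y / edot y y * edot x y -
       edot x y / edot y y * (edot x y / edot y y * edot y y))
      = edot x x - edot x y ^+ 2 / edot y y.
    exact: aux.
  rewrite e subr_ge0 ler_pdivrMr // in h.
have [hxy|hxy] := lerP (edot x y) 0.
  by apply: (le_trans hxy); rewrite mulr_ge0 // enorm_ge0.
rewrite /enorm -sqrtrM ?edot_ge0 //.
have -> : edot x y = Num.sqrt (edot x y ^+ 2) by rewrite sqrtr_sqr ger0_norm // ltW.
by rewrite ler_sqrt // mulr_ge0 // edot_ge0.
Qed.

Lemma enorm_triangle x y : enorm (x + y) <= enorm x + enorm y.
Proof.
rewrite -(@ler_pXn2r _ 2) ?nnegrE ?addr_ge0 ?enorm_ge0 //.
rewrite enorm_sqr edotDl !edotDr (edotC y x) sqrrD !enorm_sqr.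
have := cauchy_schwarz x y. lra.
Qed.

Lemma enormZ (c : R) x : enorm (c *: x) = `|c| * enorm x.
Proof.
by rewrite /enorm edotZl edotZr mulrA -expr2 sqrtrM ?sqr_ge0 // sqrtr_sqr.
Qed.

Lemma enormN x : enorm (- x) = enorm x.
Proof. by rewrite -scaleN1r enormZ normrN1 mul1r. Qed.

Lemma enormB x y : enorm (x - y) = enorm (y - x).
Proof. by rewrite -enormN opprB. Qed.

Lemma enorm0 : enorm (0 : 'rV[R]_d) = 0.
Proof. by rewrite -(scale0r (0 : 'rV[R]_d)) enormZ normr0 mul0r. Qed.

Lemma enorm_rev_tri x y : enorm x - enorm y <= enorm (x - y).
Proof.
have := enorm_triangle (x - y) y. rewrite subrK. lra.
Qed.

Lemma entry_le_mxnorm x i : `|x ord0 i| <= `|x|.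
Proof.
have -> : `|x| = mx_norm x by [].
rewrite mx_normrE.
by apply: (le_trans _ (le_bigmax _ _ (ord0, i))).
Qed.

Lemma enorm_le_mx x : enorm x <= d%:R * `|x|.
Proof.
have hx : 0 <= `|x| by [].
rewrite /enorm.
have h1 : edot x x <= (d%:R * `|x|) ^+ 2.
  apply: (@le_trans _ _ (\sum_(i < d) `|x| ^+ 2)).
    rewrite /edot; apply: ler_sum => i _.
    rewrite -expr2 -real_normK ?num_real //.
    by rewrite lerXn2r ?nnegrE ?normr_ge0 // entry_le_mxnorm.
  rewrite sumr_const card_ord exprMn.
  have -> : `|x| ^+ 2 *+ d = d%:R * `|x| ^+ 2 by rewrite mulr_natl.
  have hd : (d%:R : R) <= d%:R ^+ 2.
    case: d => [|n]; first by rewrite expr0n.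
    by rewrite expr2 ler_peMl // ler1n.
  by apply: ler_wpM2r => //; rewrite sqr_ge0.
rewrite -[X in _ <= X]ger0_norm ?mulr_ge0 // -sqrtr_sqr.
by rewrite ler_sqrt // sqr_ge0.
Qed.

End Eucl.
Arguments edotC {R d}.
Arguments edotDl {R d}.
Arguments edotZl {R d}.
Arguments edotNl {R d}.
Arguments edotBl {R d}.
Arguments edotDr {R d}.
Arguments edotZr {R d}.
Arguments edotNr {R d}.
Arguments edotBr {R d}.
Arguments edot_ge0 {R d}.
Arguments enorm_ge0 {R d}.
Arguments enorm_sqr {R d}.
Arguments edot0 {R d}.
Arguments cauchy_schwarz {R d}.
Arguments enorm_triangle {R d}.
Arguments enormZ {R d}.
Arguments enormN {R d}.
Arguments enormB {R d}.
Arguments enorm_rev_tri {R d}.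
Arguments entry_le_mxnorm {R d}.
Arguments enorm_le_mx {R d}.
Arguments enorm0 {R d}.


Set Implicit Arguments. Unset Strict Implicit.
Lemma itv_convex (R : realType) (I : interval R) a b x :
  a \in I -> b \in I -> a <= x -> x <= b -> x \in I.
Proof.
move=> ha hb hax hxb.
have := @interval_is_interval R I a b ha hb x.
by rewrite hax hxb => /(_ isT).
Qed.

Section Plen.
Variable R : realType.
Variable d : nat.
Variable gamma : R -> 'rV[R]_d.

Fixpoint plen (s : seq R) : R :=
  if s is x :: s' then
    (if s' is y :: _ then enorm (gamma x - gamma y) + plen s' else 0)
  else 0.

Lemma polylenE s : polylen gamma s = plen s.
Proof.
rewrite /polylen; elim: s => [|x s IH]; first by rewrite big_ord0.
case: s IH => [|y s] IH; first by rewrite /= big_ord0.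
have -> : plen [:: x, y & s] = enorm (gamma x - gamma y) + plen (y :: s) by [].
rewrite -IH big_ord_recl; congr (_ + _).
Qed.

Lemma plen_ge0 s : 0 <= plen s.
Proof.
elim: s => [|x s IH] //=; case: s IH => [|y s] IH //=.
by rewrite addr_ge0 // enorm_ge0.
Qed.

Lemma plen_cons2 x y r : plen [:: x, y & r] = enorm (gamma x - gamma y) + plen (y :: r).
Proof. by []. Qed.

Lemma plen_cat_cons A x B : plen (A ++ x :: B) = plen (rcons A x) + plen (x :: B).
Proof.
elim: A => [|a A IH]; first by rewrite /= add0r.
case: A IH => [|a' A] IH; first by rewrite /= addr0.
by rewrite cat_cons !rcons_cons cat_cons plen_cons2 -cat_cons IH plen_cons2 addrA.
Qed.

Lemma plen_split A B x : plen (A ++ B) <= plen (rcons A x) + plen (x :: B).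
Proof.
elim: A => [|a A IH].
  case: B => [|b B] /=; first by rewrite addr0.
  by rewrite add0r lerDr enorm_ge0.
case: A IH => [|a' A] IH.
  clear IH; case: B => [|b B] /=; first by rewrite !addr0 enorm_ge0.
  rewrite addr0 addrA lerD2r.
  by have := enorm_triangle (gamma a - gamma x) (gamma x - gamma b); rewrite addrA subrK.
by rewrite cat_cons !rcons_cons cat_cons plen_cons2 -cat_cons plen_cons2 -addrA lerD2l -rcons_cons.
Qed.

Lemma plen_rcons a A u :
  plen (rcons (a :: A) u) = plen (a :: A) + enorm (gamma (last a A) - gamma u).
Proof.
elim: A a => [|b A IH] a /=; first by rewrite add0r addr0.
by have := IH b; rewrite /= => ->; rewrite addrA.
Qed.

Lemma plen_chord x Q : enorm (gamma x - gamma (last x Q)) <= plen (x :: Q).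
Proof.
elim: Q x => [|y Q IH] x /=; first by rewrite subrr enorm0.
have := enorm_triangle (gamma x - gamma y) (gamma y - gamma (last y Q)).
rewrite addrA subrK => h; apply: (le_trans h); rewrite lerD2l; exact: IH.
Qed.

Lemma plen_const s B : all (fun b => b == s) B -> plen (s :: B) = 0.
Proof.
elim: B => [|b B IH] //= /andP[/eqP -> h].
by rewrite subrr enorm0 add0r; exact: IH h.
Qed.

End Plen.

Lemma split_seq (R : realType) (s : R) P : sorted <%R P ->
  exists lo hi, [/\ P = lo ++ hi, all (fun x => x < s) lo & all (fun x => s <= x) hi].
Proof.
elim: P => [|x P IH] hs; first by exists [::], [::].
case: (leP s x) => hx.
  exists [::], (x :: P); split => //=; rewrite hx /=.
  have h := order_path_min (@lt_trans _ R) hs.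
  by apply/allP => y hy; apply: le_trans hx (ltW (allP h y hy)).
have [lo [hi [-> h1 h2]]] := IH (path_sorted hs).
by exists (x :: lo), hi; split => //=; rewrite hx h1.
Qed.

Local Open Scope classical_set_scope.

Lemma within_nbhs_ex (R : realType) (D : set R) (m : R) (P : R -> Prop) :
  (\forall u \near within D (nbhs m), P u) ->
  exists2 dl, 0 < dl & forall u, `|m - u| < dl -> D u -> P u.
Proof.
rewrite near_withinE => /nbhs_ballP [e he H].
by exists e => // u hu Du; apply: H => //.
Qed.

Lemma right_nbhs_ex (R : realType) (D : set R) (P : R -> Prop) :
  (\forall h \near within D (0:R)^'+, P h) ->
  exists2 dl, 0 < dl & forall h, 0 < h -> h < dl -> D h -> P h.
Proof.
rewrite near_withinE => H.
have [dl hdl H2] := @within_nbhs_ex R _ 0 (fun h => D h -> P h) H.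
exists dl => // h h0 hd Dh; apply: H2 => //.
by rewrite sub0r normrN gtr0_norm.
Qed.

Definition eelH (R : realType) (d : nat) (lam : R) (I : interval R)
  (gamma gd : R -> 'rV[R]_d) := forall tau, tau \in I ->
      [/\ right_deriv I gamma tau (gd tau), gd tau != 0 &
          forall t, t \in I -> t < tau ->
            edot (gd tau) (gamma t - gamma tau)
              <= lam * enorm (gd tau) * enorm (gamma t - gamma tau)].

Definition phi (R : realType) (d : nat) (gamma : R -> 'rV[R]_d) t1 u :=
  enorm (gamma t1 - gamma u).

Lemma step_alg (R : realType) (d : nat) (lam : R) (I : interval R)
  (gamma gd : R -> 'rV[R]_d) t1 m h :
  -1 <= lam -> lam <= 1 -> eelH lam I gamma gd -> t1 \in I ->
  t1 <= m -> m \in I -> 0 < h ->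
  phi gamma t1 m - phi gamma t1 (m + h) - lam * enorm (gamma m - gamma (m + h))
   <= 2 * enorm (gamma (m + h) - gamma m - h *: gd m).
Proof.
move=> hlam hlam1 hgd ht1 htm hm h0.
set v := gd m; set w := gamma t1 - gamma m.
set r := gamma (m + h) - gamma m - h *: v.
have hr0 := enorm_ge0 r.
have hv0 := enorm_ge0 v.
have hw0 := enorm_ge0 w.
have key1 : enorm w - h * lam * enorm v <= enorm (w - h *: v).
  have [hw|hw] := eqVneq (enorm w) 0.
    have := enorm_rev_tri (h *: v) w.
    rewrite enormZ gtr0_norm // hw -enormB => H.
    have h1 : 0 <= 1 + lam by lra.
    have hp := mulr_ge0 h1 (mulr_ge0 (ltW h0) hv0). nra.
  have hwp : 0 < enorm w by rewrite lt_def hw hw0.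
  have htm' : t1 < m.
    rewrite lt_def htm andbT; apply/eqP => e.
    by move: hw; rewrite /w e subrr enorm0 eqxx.
  have [_ _ /(_ t1 ht1 htm') heel] := hgd _ hm.
  have cs := cauchy_schwarz w (w - h *: v).
  rewrite edotBr edotZr -enorm_sqr (edotC w v) in cs.
  rewrite -(ler_pM2l hwp).
  have : h * edot v w <= h * (lam * enorm v * enorm w) by rewrite ler_pM2l.
  move: heel; rewrite -/w => heel.
  nra.
have key2 : enorm (w - h *: v) - enorm r <= phi gamma t1 (m + h).
  rewrite /phi.
  have -> : gamma t1 - gamma (m + h) = (w - h *: v) - r.
    by apply/rowP => i; rewrite /r /w !mxE; ring.
  exact: enorm_rev_tri.
set D := enorm (gamma m - gamma (m + h)).
have hD1 : D <= h * enorm v + enorm r.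
  rewrite /D; have -> : gamma m - gamma (m + h) = - (h *: v + r).
    by apply/rowP => i; rewrite /r !mxE; ring.
  by rewrite enormN (le_trans (enorm_triangle _ _)) // enormZ gtr0_norm.
have hD2 : h * enorm v - enorm r <= D.
  rewrite /D; have -> : gamma m - gamma (m + h) = - (h *: v + r).
    by apply/rowP => i; rewrite /r !mxE; ring.
  rewrite enormN; have := enorm_rev_tri (h *: v) (- r).
  by rewrite opprK enormN enormZ gtr0_norm.
have phim : phi gamma t1 m = enorm w by [].
rewrite phim.
have hhv : 0 <= h * enorm v by rewrite mulr_ge0 // ltW.
case: (lerP 0 lam) => hl; nra.
Qed.


Lemma step (R : realType) (d : nat) (lam : R) (I : interval R)
  (gamma gd : R -> 'rV[R]_d) t1 m e :
  -1 <= lam -> lam <= 1 -> eelH lam I gamma gd -> t1 \in I ->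
  t1 <= m -> m \in I -> 0 < e ->
  exists2 dl, 0 < dl & forall h, 0 < h -> h < dl -> m + h \in I ->
   phi gamma t1 m - phi gamma t1 (m + h) - lam * enorm (gamma m - gamma (m + h))
     <= e * h.
Proof.
move=> hlam hlam1 hgd ht1 htm hm he.
have [hrd _ _] := hgd _ hm.
have hk : 0 <= (d%:R : R) by [].
set eps := e / (2 * (d%:R + 1)).
have hk1 : 0 < 2 * ((d%:R : R) + 1) by rewrite mulr_gt0 // ltr_wpDl.
have heps : 0 < eps by rewrite divr_gt0.
have epsE : eps * (2 * (d%:R + 1)) = e by rewrite /eps divfK // gt_eqF.
move/cvgrPdist_lt : hrd => /(_ eps heps) H.
have [dl hdl H2] := right_nbhs_ex H.
exists dl => // h h0 hdl' hI.
have Hh := H2 h h0 hdl' hI.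
apply: le_trans (step_alg hlam hlam1 hgd ht1 htm hm h0) _.
set X := gamma (m + h) - gamma m.
have -> : X - h *: gd m = h *: (h^-1 *: X - gd m).
  by rewrite scalerBr scalerA mulfV ?gt_eqF // scale1r.
rewrite enormZ gtr0_norm // enormB.
have hE : enorm (gd m - h^-1 *: X) <= d%:R * eps.
  apply: le_trans (enorm_le_mx _) _.
  by rewrite ler_wpM2l // ltW.
have hE0 := enorm_ge0 (gd m - h^-1 *: X).
nra.
Qed.

Definition inseg (R : realType) (a u x : R) := (a <= x) && (x <= u).

Lemma extendQ (R : realType) (d : nat) (gamma : R -> 'rV[R]_d) a Q u u' :
  sorted <%R (a :: Q) -> all (inseg a u) (a :: Q) -> last a Q = u -> u < u' ->
  [/\ sorted <%R (a :: rcons Q u'), all (inseg a u') (a :: rcons Q u'),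
      last a (rcons Q u') = u' &
      plen gamma (a :: rcons Q u') = plen gamma (a :: Q) + enorm (gamma u - gamma u')].
Proof.
move=> hs ha hl hu.
have au : a <= u by move: ha => /= /andP[/andP[_ ->]].
split.
- by move: hs => /= hs; rewrite rcons_path hs hl.
- rewrite -rcons_cons all_rcons; apply/andP; split.
    by rewrite /inseg (le_trans au (ltW hu)) lexx.
  apply: sub_all ha => x; rewrite /inseg => /andP[-> hx] /=.
  exact: le_trans hx (ltW hu).
- by rewrite last_rcons.
- by rewrite -rcons_cons plen_rcons hl.
Qed.

Lemma cont_ex (R : realType) (d : nat) (I : interval R) (gamma : R -> 'rV[R]_d) m eps :
  {within [set` I], continuous gamma} -> m \in I -> 0 < eps ->
  exists2 dl, 0 < dl & forall u, `|m - u| < dl -> u \in I -> `|gamma m - gamma u| < eps.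
Proof.
move=> hc hm he.
have := (proj1 (subspace_continuousP [set` I] gamma)) hc m hm.
move/cvgrPdist_lt => /(_ eps he) H.
have [dl hdl H2] := within_nbhs_ex H.
by exists dl.
Qed.

Lemma core (R : realType) (d : nat) (lam : R) (I : interval R)
  (gamma gd : R -> 'rV[R]_d) t1 a b e :
  -1 <= lam -> lam <= 1 -> {within [set` I], continuous gamma} ->
  eelH lam I gamma gd -> t1 \in I ->
  t1 <= a -> a <= b -> a \in I -> b \in I -> 0 < e ->
  exists Q, [/\ sorted <%R (a :: Q), all (inseg a b) (a :: Q), last a Q = b &
     phi gamma t1 a - phi gamma t1 b - lam * plen gamma (a :: Q) <= e].
Proof.
move=> hlam hlam1 hcont hgd ht1 hta hab ha hb he.
case: (eqVneq a b) => [<-|hab'].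
  exists [::]; split => //=; first by rewrite /inseg lexx.
  by rewrite subrr mulr0 subr0 ltW.
have hab2 : a < b by rewrite lt_def eq_sym hab' hab.
set c := e / (2 * (b - a)).
have hc : 0 < c by rewrite divr_gt0 // mulr_gt0 // subr_gt0.
have cE : c * (b - a) = e / 2.
  rewrite /c; field; rewrite subr_eq0 eq_sym; exact: hab'.
pose good u eta := exists Q, [/\ sorted <%R (a :: Q), all (inseg a u) (a :: Q),
   last a Q = u &
   phi gamma t1 a - phi gamma t1 u - lam * plen gamma (a :: Q) <= c * (u - a) + eta].
pose A := [set u | (a <= u <= b) /\ forall eta, 0 < eta -> good u eta].
have Aa : A a.
  split; first by rewrite lexx hab.
  move=> eta heta; exists [::]; split => //=; first by rewrite /inseg lexx.
  by rewrite !subrr mulr0 subr0 mulr0 add0r ltW.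
have hsA : has_sup A.
  split; first by exists a.
  by exists b => u [/andP[_ ->]].
set m := sup A.
have am : a <= m := sup_upper_bound hsA Aa.
have mb : m <= b by apply: ge_sup; [exists a | move=> u [/andP[_ ->]]].
have mI : m \in I := itv_convex ha hb am mb.
have tm : t1 <= m := le_trans hta am.
have Am : A m.
  split; first by rewrite am mb.
  move=> eta heta.
  have hk : 0 <= (d%:R : R) by [].
  set eps := eta / (4 * (d%:R + 1)).
  have hk1 : 0 < 4 * ((d%:R : R) + 1) by rewrite mulr_gt0 // ltr_wpDl.
  have heps : 0 < eps by rewrite divr_gt0.
  have epsE : eps * (4 * (d%:R + 1)) = eta by rewrite /eps divfK // gt_eqF.
  have [dl hdl Hc] := cont_ex hcont mI heps.
  have [u Au hu] := sup_adherent hdl hsA.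
  have um : u <= m := sup_upper_bound hsA Au.
  case: (eqVneq u m) => [<-|hum]; first by case: Au => _; apply.
  have um' : u < m by rewrite lt_def eq_sym hum um.
  have heta2 : 0 < eta / 2 by rewrite divr_gt0.
  case: (Au) => /andP[au ub] Hu.
  have [Q [s1 s2 s3 s4]] := Hu _ heta2.
  have [e1 e2 e3 e4] := extendQ gamma s1 s2 s3 um'.
  exists (rcons Q m); split => //; rewrite e4.
  have uI : u \in I := itv_convex ha hb au ub.
  have hmu : `|m - u| < dl by rewrite ger0_norm ?subr_ge0 //; move: hu; rewrite -/m; lra.
  have Hcu := Hc u hmu uI.
  have hE : enorm (gamma u - gamma m) <= d%:R * eps.
    rewrite enormB; apply: le_trans (enorm_le_mx _) _.
    by rewrite ler_wpM2l // ltW.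
  have hphi : phi gamma t1 u - phi gamma t1 m <= enorm (gamma u - gamma m).
    rewrite /phi; have := enorm_rev_tri (gamma t1 - gamma u) (gamma t1 - gamma m).
    have -> : gamma t1 - gamma u - (gamma t1 - gamma m) = - (gamma u - gamma m).
      by apply/rowP => i; rewrite !mxE; ring.
    by rewrite enormN.
  have hE0 := enorm_ge0 (gamma u - gamma m).
  have hl : - lam * enorm (gamma u - gamma m) <= enorm (gamma u - gamma m).
    have : 0 <= (1 + lam) * enorm (gamma u - gamma m) by rewrite mulr_ge0 //; lra.
    nra.
  have hcu : c * (u - a) <= c * (m - a) by apply: ler_wpM2l; [exact: ltW | rewrite lerD2r].
  nra.
have mbE : m = b.
  apply/eqP; rewrite eq_le mb /= leNgt; apply/negP => hmb.
  have [dl hdl Hs] := step hlam hlam1 hgd ht1 tm mI hc.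
  have [h [h0 hdl' hbm]] : exists h, [/\ 0 < h, h < dl & h <= b - m].
    case: (lerP (dl / 2) (b - m)) => H.
      by exists (dl / 2); split => //; lra.
    by exists (b - m); split => //; lra.
  have hI : m + h \in I by apply: (itv_convex ha hb); lra.
  have mh : m < m + h by lra.
  have Amh : A (m + h).
    split; first by apply/andP; split; lra.
    move=> eta heta.
    case: Am => _ /(_ _ heta) [Q [s1 s2 s3 s4]].
    have [e1 e2 e3 e4] := extendQ gamma s1 s2 s3 mh.
    exists (rcons Q (m + h)); split => //; rewrite e4.
    have := Hs h h0 hdl' hI.
    nra.
  have := sup_upper_bound hsA Amh.
  rewrite -/m; lra.
have e2 : 0 < e / 2 by rewrite divr_gt0.
case: Am => _ /(_ _ e2) [Q [s1 s2 s3 s4]].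
exists Q; split; rewrite -?mbE //.
move: s4; rewrite mbE cE; lra.
Qed.


Lemma L_ub (R : realType) (d : nat) (gamma : R -> 'rV[R]_d) a b P :
  sorted <%R P -> all (inseg a b) P -> ((plen gamma P)%:E <= curve_length gamma a b)%E.
Proof.
move=> hs ha; apply: ereal_sup_ubound; exists P; last by rewrite polylenE.
by split.
Qed.

Lemma L_ge0 (R : realType) (d : nat) (gamma : R -> 'rV[R]_d) a b :
  (0 <= curve_length gamma a b)%E.
Proof. by have := @L_ub R d gamma a b [::] isT isT. Qed.

Lemma L_le (R : realType) (d : nat) (gamma : R -> 'rV[R]_d) a b x :
  (forall P, sorted <%R P -> all (inseg a b) P -> plen gamma P <= x) ->
  (curve_length gamma a b <= x%:E)%E.
Proof.
move=> H; apply: ub_ereal_sup => _ [P [hs ha] <-].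
by rewrite lee_fin polylenE; apply: H.
Qed.

Lemma L_fin (R : realType) (d : nat) (gamma : R -> 'rV[R]_d) a b x :
  (curve_length gamma a b <= x%:E)%E ->
  exists q, [/\ curve_length gamma a b = q%:E, 0 <= q & q <= x].
Proof.
have := L_ge0 gamma a b.
case: (curve_length gamma a b) => [q| |] //= h1 h2.
by exists q; split => //; rewrite -lee_fin.
Qed.

Lemma sorted_join (R : realType) (lo Q : seq R) s :
  sorted <%R lo -> all (fun x => x < s) lo -> sorted <%R (s :: Q) ->
  sorted <%R (lo ++ s :: Q).
Proof.
case: lo => [|x lo] // h1 h2 h3.
have hl := allP h2 (last x lo) (mem_last x lo).
move: h1 h3 => /= h1 h3.
by rewrite cat_path h1 /= h3 andbT hl.
Qed.

Lemma sorted_rcons_lt (R : realType) (lo : seq R) s :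
  sorted <%R lo -> all (fun x => x < s) lo -> sorted <%R (rcons lo s).
Proof.
move=> h1 h2; rewrite -cats1; apply: sorted_join => //.
Qed.


Lemma pw_neg (R : realType) (d : nat) (lam : R) (I : interval R)
  (gamma gd : R -> 'rV[R]_d) t1 a b :
  -1 <= lam -> lam <= 1 -> lam < 0 -> {within [set` I], continuous gamma} ->
  eelH lam I gamma gd -> t1 \in I ->
  t1 <= a -> a <= b -> a \in I -> b \in I ->
  (- lam) * enorm (gamma a - gamma b) <= phi gamma t1 b - phi gamma t1 a.
Proof.
move=> h1 h2 h3 hc hg ht hta hab ha hb.
apply/ler_addgt0Pr => e he.
have [Q [s1 s2 s3 s4]] := core h1 h2 hc hg ht hta hab ha hb he.
have hch := plen_chord gamma a Q; rewrite s3 in hch.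
have : lam * (plen gamma (a :: Q) - enorm (gamma a - gamma b)) <= 0.
  by rewrite nmulr_rle0 // subr_ge0.
lra.
Qed.

Lemma phi_mono (R : realType) (d : nat) (lam : R) (I : interval R)
  (gamma gd : R -> 'rV[R]_d) t1 a b :
  -1 <= lam -> lam <= 1 -> lam < 0 -> {within [set` I], continuous gamma} ->
  eelH lam I gamma gd -> t1 \in I ->
  t1 <= a -> a <= b -> a \in I -> b \in I ->
  phi gamma t1 a <= phi gamma t1 b.
Proof.
move=> h1 h2 h3 hc hg ht hta hab ha hb.
have := pw_neg h1 h2 h3 hc hg ht hta hab ha hb.
have : 0 <= (- lam) * enorm (gamma a - gamma b) by rewrite mulr_ge0 ?enorm_ge0 //; lra.
lra.
Qed.

Lemma chain_neg (R : realType) (d : nat) (lam : R) (I : interval R)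
  (gamma gd : R -> 'rV[R]_d) t1 :
  -1 <= lam -> lam <= 1 -> lam < 0 -> {within [set` I], continuous gamma} ->
  eelH lam I gamma gd -> t1 \in I ->
  forall Q x, path <=%R x Q -> t1 <= x -> x \in I -> all (fun y => y \in I) Q ->
  (- lam) * plen gamma (x :: Q) <= phi gamma t1 (last x Q) - phi gamma t1 x.
Proof.
move=> h1 h2 h3 hc hg ht; elim => [|y Q IH] x hp hx xI hQ.
  by rewrite /= mulr0 subrr.
have /andP[hxy hp'] := hp; have /andP[yI hQ'] := hQ.
rewrite plen_cons2.
have := IH y hp' (le_trans hx hxy) yI hQ'.
have := pw_neg h1 h2 h3 hc hg ht hx hxy xI yI.
lra.
Qed.


Unset Implicit Arguments. Set Strict Implicit.

Lemma inseg_in (R : realType) (I : interval R) a b x :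
  a \in I -> b \in I -> inseg a b x -> x \in I.
Proof. by move=> ha hb /andP[h1 h2]; apply: itv_convex ha hb h1 h2. Qed.
Arguments inseg_in {R I a b x}.


End Helpers.
Import Helpers.

Theorem lemma4p1 (R : realType) (d : nat) (lam : R) (I : interval R)
    (gamma : R -> 'rV[R]_d) :
  -1 <= lam -> lam < 1 -> eel lam I gamma ->
  forall t1 s t : R, t1 \in I -> s \in I -> t \in I -> t1 <= s -> s <= t ->
    ((enorm (gamma t1 - gamma s))%:E + lam%:E * curve_length gamma t1 s
      <= (enorm (gamma t1 - gamma t))%:E + lam%:E * curve_length gamma t1 t)%E.
Proof.
move=> hlam hlam1' [hcont [gd hgd0]] t1 s t ht1 hs ht hts hst.
have hgd : eelH lam I gamma gd := hgd0.
have hlam1 : lam <= 1 by apply: ltW.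
have -> : enorm (gamma t1 - gamma s) = phi gamma t1 s by [].
have -> : enorm (gamma t1 - gamma t) = phi gamma t1 t by [].
have htt : t1 <= t := le_trans hts hst.
case: (ltgtP lam 0) => hl.
-
  have mu0 : 0 < - lam by rewrite oppr_gt0.
  have Lb : forall u, u \in I -> t1 <= u -> forall P, sorted <%R P -> all (inseg t1 u) P ->
      plen gamma P <= (phi gamma t1 u - phi gamma t1 t1) / (- lam).
    move=> u hu htu P hP hPa; rewrite ler_pdivlMr // mulrC.
    case: P hP hPa => [|x Q] hP hPa.
      by rewrite /= mulr0 subr_ge0 (phi_mono hlam hlam1 hl hcont hgd ht1 (lexx t1) htu ht1 hu).
    have hxa : inseg t1 u x by move: hPa => /= /andP[].
    have xI : x \in I := inseg_in ht1 hu hxa.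
    have hQI : all (fun y => y \in I) Q.
      by apply/allP => y hy; apply: (inseg_in ht1 hu); apply: (allP hPa); rewrite inE hy orbT.
    have hpath : path <=%R x Q.
      by apply: (sub_path _ hP) => a b /ltW.
    move: hxa => /andP[hx1 hx2].
    have := chain_neg hlam hlam1 hl hcont hgd ht1 hpath hx1 xI hQI.
    have hla : inseg t1 u (last x Q) by apply: (allP hPa); rewrite mem_last.
    move: (hla) => /andP[hl1 hl2].
    have lI : last x Q \in I := inseg_in ht1 hu hla.
    have := phi_mono hlam hlam1 hl hcont hgd ht1 hl1 hl2 lI hu.
    have := phi_mono hlam hlam1 hl hcont hgd ht1 (lexx t1) hx1 ht1 xI.
    lra.
  have [q [Eq q0 qle]] := L_fin (L_le (Lb s hs hts)).
  have B : forall P, sorted <%R P -> all (inseg t1 t) P ->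
      plen gamma P <= q + (phi gamma t1 t - phi gamma t1 s) / (- lam).
    move=> P hP hPa.
    have [lo [hi [EP hlo hhi]]] := split_seq s hP.
    have [slo shi] : sorted <%R lo * sorted <%R hi by apply: cat_sorted2; rewrite -EP.
    have inP : forall y, (y \in lo) || (y \in hi) -> inseg t1 t y.
      by move=> y hy; apply: (allP hPa); rewrite EP mem_cat.
    have sp := plen_split gamma lo hi s; rewrite -EP in sp.
    have h1 : plen gamma (rcons lo s) <= q.
      rewrite -lee_fin -Eq; apply: L_ub.
        exact: sorted_rcons_lt.
      rewrite all_rcons /inseg hts lexx /=.
      apply/allP => y hy; have /andP[-> _] : inseg t1 t y by apply: inP; rewrite hy.
      by rewrite ltW // (allP hlo).
    have hpath : path <=%R s hi.
      rewrite path_min_sorted //; first by apply: (sub_sorted _ shi) => a b /ltW.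
    have hiI : all (fun y => y \in I) hi.
      by apply/allP => y hy; apply: (inseg_in ht1 ht); apply: inP; rewrite hy orbT.
    have := chain_neg hlam hlam1 hl hcont hgd ht1 hpath hts hs hiI.
    have hla : s <= last s hi /\ last s hi <= t.
      have := mem_last s hi; rewrite inE => /orP[/eqP ->|hy]; first by split.
      split; first exact: (allP hhi).
      by have /andP[_ ->] : inseg t1 t (last s hi) by apply: inP; rewrite hy orbT.
    case: hla => hla1 hla2.
    have lI : last s hi \in I := itv_convex hs ht hla1 hla2.
    have := phi_mono hlam hlam1 hl hcont hgd ht1 (le_trans hts hla1) hla2 lI ht.
    move=> hm hc.
    rewrite -(ler_pM2r mu0) mulrDl divfK ?gt_eqF //.
    have hpl := plen_ge0 gamma (s :: hi).
    nra.
  have [r [Er r0 rle]] := L_fin (L_le B).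
  rewrite Eq Er -!EFinM -!EFinD lee_fin.
  have E : (q + (phi gamma t1 t - phi gamma t1 s) / (- lam)) * (- lam)
      = q * (- lam) + (phi gamma t1 t - phi gamma t1 s).
    by field; rewrite lt_eqF.
  have := ler_wpM2r (ltW mu0) rle; rewrite E.
  nra.
-
  case Et: (curve_length gamma t1 t) => [r| |].
  + have B : forall P, sorted <%R P -> all (inseg t1 s) P ->
        plen gamma P <= r + (phi gamma t1 t - phi gamma t1 s) / lam.
      move=> P hP hPa.
      rewrite -(ler_pM2l hl) mulrDr mulrCA divff ?gt_eqF // mulr1.
      apply/ler_addgt0Pr => e he.
      have [Q [q1 q2 q3 q4]] := core hlam hlam1 hcont hgd ht1 hts hst hs ht he.
      have [lo [hi [EP hlo hhi]]] := split_seq s hP.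
      have [slo shi] : sorted <%R lo * sorted <%R hi by apply: cat_sorted2; rewrite -EP.
      have inP : forall y, (y \in lo) || (y \in hi) -> inseg t1 s y.
        by move=> y hy; apply: (allP hPa); rewrite EP mem_cat.
      have hiS : all (fun b => b == s) hi.
        apply/allP => y hy; have /andP[_ h2] : inseg t1 s y by apply: inP; rewrite hy orbT.
        by rewrite eq_le h2 (allP hhi).
      have sp := plen_split gamma lo hi s; rewrite -EP plen_const // addr0 in sp.
      have hR : sorted <%R (lo ++ s :: Q) by apply: sorted_join.
      have hRa : all (inseg t1 t) (lo ++ s :: Q).
        rewrite all_cat; apply/andP; split.
          apply/allP => y hy; rewrite /inseg; have /andP[-> h2] : inseg t1 s y by apply: inP; rewrite hy.
          exact: le_trans h2 hst.
        apply: sub_all q2 => y /andP[h1 h2]; rewrite /inseg h2 andbT.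
        exact: le_trans hts h1.
      have := L_ub gamma hR hRa; rewrite Et lee_fin plen_cat_cons => hRl.
      have hq := plen_ge0 gamma (s :: Q).
      nra.
    have [q [Eq q0 qle]] := L_fin (L_le B).
    rewrite Eq -!EFinM -!EFinD lee_fin.
    move: qle; rewrite -(ler_pM2l hl) mulrDr mulrCA divff ?gt_eqF // mulr1.
    lra.
  + by rewrite gt0_muley ?lte_fin // addey // leey.
  + by have := L_ge0 gamma t1 t; rewrite Et.
-
  rewrite hl !mul0e !adde0 lee_fin.
  apply/ler_addgt0Pr => e he.
  have [Q [q1 q2 q3 q4]] := core hlam hlam1 hcont hgd ht1 hts hst hs ht he.
  move: q4; rewrite hl mul0r subr0; lra.
Qed.
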